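(* Let $V\subseteq\mathbb{R}^n$ be a set with at least two points such that $|v-v'|\geq1$ for all distinct $v,v'\in V$. Suppose there are lines $\ell_1,\ell_2$ and a number $0\leq\alpha\leq1/16$ such that $\mathrm{dist}(v,\ell_i)\leq\alpha$ for all $v\in V$ and $i=1,2$. Let $\pi_i$ be the orthogonal projection onto $\ell_i$. Then there are identifications of $\ell_1$ and $\ell_2$ with $\mathbb{R}$ such that $\pi_1(v')\leq\pi_1(v'')$ if and only if $\pi_2(v')\leq\pi_2(v'')$ for all $v',v''\in V$. If $v_1,v_2$ are consecutive points of $V$ with respect to the order of $\pi_1(V)$, then $\mathcal{H}^1([u_1,u_2])<(1+3\alpha^2)\,\mathcal{H}^1([\pi_1(u_1),\pi_1(u_2)])$ for every segment $[u_1,u_2]\subseteq[v_1,v_2]$. Moreover, $\mathcal{H}^1([y_1,y_2])<(1+12\alpha^2)\,\mathcal{H}^1([\pi_1(y_1),\pi_1(y_2)])$ for every segment $[y_1,y_2]\subseteq\ell_2$.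
   Context: $[a,b]$ denotes the closed line segment from $a$ to $b$; $\mathcal{H}^1$ is one-dimensional Hausdorff measure. *)

(* Defs.v *)
From HB Require Import structures.
From mathcomp Require Import all_boot all_order all_algebra.
From mathcomp Require Import all_classical all_reals all_analysis.
Set Implicit Arguments. Unset Strict Implicit. Unset Printing Implicit Defensive.
Import Order.TTheory GRing.Theory Num.Theory.
Local Open Scope classical_set_scope.
Local Open Scope ring_scope.

Section Defs.
Variables (R : realType) (n : nat).
Notation vec := 'rV[R]_n.

Definition dotv (u v : vec) : R := \sum_(i < n) u 0 i * v 0 i.
Definition enorm (u : vec) : R := Num.sqrt (dotv u u).

(* the line through p with direction d (d <> 0 is assumed where used) *)
Definition line (p d : vec) : set vec := [set p + t *: d | t in [set: R]].

Definition dist_set (v : vec) (A : set vec) : R :=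
  inf [set enorm (v - w) | w in A].

Definition proj_line (p d : vec) (x : vec) : vec :=
  p + (dotv (x - p) d / dotv d d) *: d.

Definition segment (a b : vec) : set vec :=
  [set (1 - t) *: a + t *: b | t in `[0, 1]%classic].

Definition line_identification (L : set vec) (phi : vec -> R) : Prop :=
  (forall x y, L x -> L y -> `|phi x - phi y| = enorm (x - y)) /\
  (forall r : R, exists2 x, L x & phi x = r).

(* diameter (in \bar R), with diam of the empty set = 0 *)
Definition diam (A : set vec) : \bar R :=
  ereal_sup ([set 0%E] `|`
    [set r | exists x y, A x /\ A y /\ r = (enorm (x - y))%:E]).

Definition H1_delta (A : set vec) (delta : R) : \bar R :=
  ereal_inf [set s | exists C : nat -> set vec,
    A `<=` \bigcup_i C i /\ (forall i, (diam (C i) <= delta%:E)%E) /\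
    s = (\sum_(0 <= i <oo) diam (C i))%E].

Definition H1 (A : set vec) : \bar R :=
  ereal_sup [set H1_delta A delta | delta in [set d : R | 0 < d]].

End Defs.

(* Main.v *)
Require Import Defs.
From HB Require Import structures.
From mathcomp Require Import all_boot all_order all_algebra.
From mathcomp Require Import all_classical all_reals all_analysis.
From mathcomp Require Import ring lra.
Import Order.TTheory GRing.Theory Num.Theory.
Local Open Scope classical_set_scope.
Local Open Scope ring_scope.
Section Vec.
Context {R : realType} {n : nat}.
Notation vec := 'rV[R]_n.
Implicit Types (u v w x y d p : vec) (a b t : R).

Lemma dotvC u v : dotv u v = dotv v u.
Proof. by rewrite /dotv; apply: eq_bigr => i _; rewrite mulrC. Qed.

Lemma dotvDl u v w : dotv (u + v) w = dotv u w + dotv v w.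
Proof. by rewrite /dotv -big_split; apply: eq_bigr => i _; rewrite !mxE mulrDl. Qed.

Lemma dotvZl a u w : dotv (a *: u) w = a * dotv u w.
Proof. by rewrite /dotv mulr_sumr; apply: eq_bigr => i _; rewrite !mxE mulrA. Qed.

Lemma dotvNl u w : dotv (- u) w = - dotv u w.
Proof. by rewrite -scaleN1r dotvZl mulN1r. Qed.

Lemma dotvBl u v w : dotv (u - v) w = dotv u w - dotv v w.
Proof. by rewrite dotvDl dotvNl. Qed.

Lemma dotvDr u v w : dotv w (u + v) = dotv w u + dotv w v.
Proof. by rewrite dotvC dotvDl !(dotvC w). Qed.

Lemma dotvZr a u w : dotv w (a *: u) = a * dotv w u.
Proof. by rewrite dotvC dotvZl dotvC. Qed.

Lemma dotvNr u w : dotv w (- u) = - dotv w u.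
Proof. by rewrite dotvC dotvNl dotvC. Qed.

Lemma dotvBr u v w : dotv w (u - v) = dotv w u - dotv w v.
Proof. by rewrite dotvDr dotvNr. Qed.

Lemma dotv0l u : dotv 0 u = 0.
Proof. by rewrite -(scale0r (0 : vec)) dotvZl mul0r. Qed.

Lemma dotv0r u : dotv u 0 = 0.
Proof. by rewrite dotvC dotv0l. Qed.

Definition dotvE := (dotvDl, dotvDr, dotvZl, dotvZr, dotvNl, dotvNr, dotvBl, dotvBr, dotv0l, dotv0r).

Lemma dotv_ge0 u : 0 <= dotv u u.
Proof. by apply: sumr_ge0 => i _; rewrite -expr2 sqr_ge0. Qed.

Lemma dotv_eq0 u : dotv u u = 0 -> u = 0.
Proof.
move=> h; apply/rowP => i; rewrite mxE.
have h' : \sum_(j < n) u 0 j ^+ 2 = 0.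
  by rewrite -[RHS]h /dotv; apply: eq_bigr => j _; rewrite expr2.
have := @psumr_eq0P R _ xpredT (fun j => u 0 j ^+ 2) (fun j _ => sqr_ge0 (u 0 j)) h' i isT.
by move/eqP; rewrite sqrf_eq0 => /eqP.
Qed.

Lemma dotv_gt0 {u} : u != 0 -> 0 < dotv u u.
Proof.
move=> u0; rewrite lt_neqAle dotv_ge0 andbT; apply/eqP => h.
by move/eqP: u0; apply; apply: dotv_eq0.
Qed.

Lemma enorm_ge0 u : 0 <= enorm u.
Proof. exact: sqrtr_ge0. Qed.

Lemma enorm_sq u : enorm u ^+ 2 = dotv u u.
Proof. by rewrite /enorm sqr_sqrtr // dotv_ge0. Qed.

Lemma enorm_le u a : 0 <= a -> (enorm u <= a) = (dotv u u <= a ^+ 2).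
Proof.
move=> a0; rewrite /enorm -{1}(ger0_norm a0) -sqrtr_sqr ler_sqrt //.
exact: sqr_ge0.
Qed.

Lemma enorm_ge u a : 0 <= a -> (a <= enorm u) = (a ^+ 2 <= dotv u u).
Proof.
move=> a0; rewrite /enorm -{1}(ger0_norm a0) -sqrtr_sqr ler_sqrt //.
exact: dotv_ge0.
Qed.

Lemma enormZ a u : enorm (a *: u) = `|a| * enorm u.
Proof.
by rewrite /enorm dotvZl dotvZr mulrA -expr2 sqrtrM ?sqr_ge0 // sqrtr_sqr.
Qed.

Lemma CS u v : dotv u v ^+ 2 <= dotv u u * dotv v v.
Proof.
have [v0|v0] := eqVneq v 0.
  by rewrite v0 !dotv0r expr0n /= mulr0.
have vp := @dotv_gt0 v v0.
pose t := dotv u v / dotv v v.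
have := dotv_ge0 (u - t *: v).
rewrite !dotvE (dotvC v u) /t => h.
move: h; set a := dotv u u; set b := dotv u v; set c := dotv v v => h.
have e : a - b / c * b + (- (b / c * b) - b / c * - (b / c * c)) = (a * c - b ^+ 2) / c.
  by field; rewrite gt_eqF.
rewrite e pmulr_lge0 ?invr_gt0 // subr_ge0 in h.
exact: h.
Qed.

Lemma enorm_triangle u v : enorm (u + v) <= enorm u + enorm v.
Proof.
rewrite enorm_le ?addr_ge0 ?enorm_ge0 //.
rewrite !dotvE (dotvC v u) sqrrD !enorm_sq.
have : dotv u v <= enorm u * enorm v.
  have := CS u v; rewrite -!enorm_sq -exprMn => h.
  apply: (le_trans (ler_norm _)).
  by rewrite -ler_sqr ?nnegrE ?mulr_ge0 ?enorm_ge0 // real_normK ?num_real.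
lra.
Qed.

End Vec.
Section Proj.
Context {R : realType} {n : nat}.
Notation vec := 'rV[R]_n.
Implicit Types (u v w x y z d p : vec) (a b t : R).

Lemma nsq_subZ z d t :
  dotv (z - t *: d) (z - t *: d) = dotv z z - 2 * t * dotv z d + t ^+ 2 * dotv d d.
Proof. rewrite !dotvE (dotvC d z); ring. Qed.

Lemma nsq_addZ z d t :
  dotv (z + t *: d) (z + t *: d) = dotv z z + 2 * t * dotv z d + t ^+ 2 * dotv d d.
Proof. rewrite !dotvE (dotvC d z); ring. Qed.

Lemma sub_proj p d x :
  x - proj_line p d x = (x - p) - (dotv (x - p) d / dotv d d) *: d.
Proof. by rewrite /proj_line opprD addrA. Qed.

Lemma projB p d x y :
  proj_line p d x - proj_line p d y = (dotv (x - y) d / dotv d d) *: d.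
Proof.
rewrite /proj_line opprD addrACA subrr add0r -scalerBl; congr (_ *: _).
rewrite -mulrBl; congr (_ * _).
by rewrite -dotvBl opprB addrA subrK.
Qed.

Lemma proj_dist_sq p d x : d != 0 ->
  dotv (x - proj_line p d x) (x - proj_line p d x) =
  dotv (x - p) (x - p) - dotv (x - p) d ^+ 2 / dotv d d.
Proof.
move=> d0; have dp := dotv_gt0 d0.
rewrite sub_proj nsq_subZ; field; by rewrite gt_eqF.
Qed.

Lemma closest p d x w : d != 0 -> line p d w ->
  dotv (x - proj_line p d x) (x - proj_line p d x) <= dotv (x - w) (x - w).
Proof.
move=> d0 [t _ <-]; have dp := dotv_gt0 d0.
rewrite proj_dist_sq // opprD addrA nsq_subZ.
set z := dotv (x - p) d; set D := dotv d d.
rewrite -subr_ge0.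
have -> : dotv (x - p) (x - p) - 2 * t * z + t ^+ 2 * D -
   (dotv (x - p) (x - p) - z ^+ 2 / D) = (t * D - z) ^+ 2 / D.
  by field; rewrite gt_eqF.
by rewrite divr_ge0 ?sqr_ge0 // ltW.
Qed.

Lemma dist_sq p d x a : d != 0 -> 0 <= a -> dist_set x (line p d) <= a ->
  dotv (x - proj_line p d x) (x - proj_line p d x) <= a ^+ 2.
Proof.
move=> d0 a0 h; rewrite -enorm_le //.
apply: le_trans h; apply: lb_le_inf.
  by exists (enorm (x - p)), p => //; exists 0 => //; rewrite scale0r addr0.
move=> r [w lw <-].
rewrite /enorm ler_sqrt ?dotv_ge0 //; exact: closest.
Qed.

End Proj.
Section H1seg.
Context {R : realType} {n : nat}.
Notation vec := 'rV[R]_n.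

Lemma seg_pt (a b : vec) t : (1 - t) *: a + t *: b = a + t *: (b - a).
Proof. by rewrite scalerBl scale1r scalerBr addrAC addrA. Qed.

Lemma enorm_sym (x y : vec) : enorm (x - y) = enorm (y - x).
Proof. by rewrite -opprB -scaleN1r enormZ normrN1 mul1r. Qed.

Local Open Scope ereal_scope.

Lemma diam_ge0 (A : set vec) : 0 <= diam A.
Proof. by apply: ereal_sup_ubound; left. Qed.

Lemma diam_ge (A : set vec) x y : A x -> A y -> (enorm (x - y))%:E <= diam A.
Proof. by move=> Ax Ay; apply: ereal_sup_ubound; right; exists x, y. Qed.

Lemma diam_le (A : set vec) (r : R) : (0 <= r)%R ->
  (forall x y, A x -> A y -> (enorm (x - y) <= r)%R) -> diam A <= r%:E.
Proof.
move=> r0 h; apply: ge_ereal_sup => z [->|[x [y [Ax [Ay ->]]]]].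
  by rewrite lee_fin.
by rewrite lee_fin; exact: h.
Qed.

Lemma diam0 : diam (@set0 vec) = 0.
Proof. by apply/le_anti; rewrite diam_ge0 andbT; apply: diam_le. Qed.

Lemma H1_seg_le (a b : vec) : H1 (segment a b) <= (enorm (b - a))%:E.
Proof.
set L := enorm (b - a).
have L0 : (0 <= L)%R by exact: enorm_ge0.
apply: ge_ereal_sup => _ [delta /= d0 <-].
set N := (Num.trunc (L / delta)).+1.
have N0 : (0 < N%:R :> R)%R by rewrite ltr0n.
have LN : (L / N%:R <= delta)%R.
  rewrite ler_pdivrMr // mulrC -ler_pdivrMr //.
  have := @truncn_itv R (L / delta); rewrite divr_ge0 ?(ltW d0) // => /(_ isT) /andP[_ h].
  exact: ltW.
pose C (k : nat) : set vec := if (k < N)%N then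
   [set (a + t *: (b - a))%R | t in `[(k%:R / N%:R)%R, (k.+1%:R / N%:R)%R]%classic] else set0.
have Cd k : diam (C k) <= (L / N%:R)%:E.
  rewrite /C; case: ifP => _; last by rewrite diam0 lee_fin divr_ge0 // ltW.
  apply: diam_le; first by rewrite divr_ge0 // ltW.
  move=> _ _ [t /= + <-] [s /= + <-]; rewrite !in_itv /= => /andP[t1 t2] /andP[s1 s2].
  rewrite opprD addrACA subrr add0r -scalerBl enormZ -/L.
  have e : (k.+1%:R / N%:R - k%:R / N%:R = 1 / N%:R :> R)%R.
    by rewrite -mulrBl -natr1 addrAC subrr add0r.
  have : (`|t - s| <= 1 / N%:R)%R.
    by rewrite ler_norml; apply/andP; split; lra.
  move=> h; rewrite mul1r in h; rewrite [X in (_ <= X)%R]mulrC.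
  exact: ler_wpM2r.
apply: ge_ereal_inf; exists (\sum_(0 <= i <oo) diam (C i)); last first.
  rewrite (nneseries_split 0 N); last by move=> k _; exact: diam_ge0.
  rewrite add0n eseries0 ?adde0; last by move=> i Ni _; rewrite /C ltnNge Ni /= diam0.
  apply: (@le_trans _ _ (\sum_(0 <= k < N) (L / N%:R)%:E)).
    by apply: lee_sum => i _; exact: Cd.
  rewrite sumEFin sumr_const_nat subn0 lee_fin -(mulr_natr (L / N%:R)) divfK //.
  by rewrite gt_eqF.
exists C; split; [|split] => //; last first.
  by move=> i; apply: le_trans (Cd i) _; rewrite lee_fin.
move=> _ [t /= + <-]; rewrite in_itv /= => /andP[t0 t1].
rewrite seg_pt.
have [t1'|t1'] := eqVneq t 1%R.
  exists N.-1 => //; rewrite /C /N /= ltnSn; exists t => //=.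
  rewrite in_itv /= t1' divff ?gt_eqF // ler_pdivrMr // mul1r ler_nat.
  by rewrite leqnSn lexx.
have tl : (t < 1)%R by rewrite lt_neqAle t1' t1.
have tN0 : (0 <= t * N%:R)%R by rewrite mulr_ge0 // ltW.
exists (Num.trunc (t * N%:R)) => //; rewrite /C.
have -> : (Num.trunc (t * N%:R) < N)%N.
  by rewrite truncn_lt_nat // -[X in (_ < X)%R]mul1r ltr_pM2r.
exists t => //=; rewrite in_itv /=.
have := truncn_itv tN0 => /andP[h1 h2].
by rewrite ler_pdivrMr // ler_pdivlMr // h1 ltW.
Qed.

End H1seg.
Section H1seg2.
Context {R : realType} {n : nat}.
Notation vec := 'rV[R]_n.

Lemma abs_dotv_le (u v : vec) : `|dotv u v| <= enorm u * enorm v.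
Proof.
rewrite -ler_sqr ?nnegrE ?mulr_ge0 ?enorm_ge0 // real_normK ?num_real //.
by rewrite exprMn !enorm_sq; exact: CS.
Qed.

Local Open Scope ereal_scope.

Lemma H1_seg_ge (a b : vec) : (enorm (b - a))%:E <= H1 (segment a b).
Proof.
set L := enorm (b - a).
apply: (@le_trans _ _ (H1_delta (segment a b) 1)); last first.
  by apply: ereal_sup_ubound; exists 1%R => //=.
apply: le_ereal_inf_tmp => _ [C [cov [Cd ->]]].
have [L0|Lp] := eqVneq L 0%R.
  rewrite L0; apply: nneseries_ge0 => i _ _; exact: diam_ge0.
have Lgt : (0 < L)%R by rewrite lt_neqAle eq_sym Lp enorm_ge0.
pose f (x : vec) := (dotv (x - a) (b - a) / L)%R.
have flip x y : (`|f x - f y| <= enorm (x - y))%R.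
  rewrite /f -mulrBl -dotvBl opprB addrA subrK normrM (gtr0_norm (x := L^-1)) ?invr_gt0 //.
  by rewrite ler_pdivrMr // abs_dotv_le.
have hI : forall i, exists I : set R, [/\ measurable I,
    (forall x, C i x -> I (f x)) & lebesgue_measure I <= diam (C i)].
  move=> i.
  have [[x0 Cx0]|C0] := pselect (exists x, C i x); last first.
    exists set0; split => //; first by move=> x Cx; apply: C0; exists x.
    by rewrite measure0 diam_ge0.
  case E: (diam (C i)) => [r| |].
  - have r0 : (0 <= r)%R by rewrite -lee_fin -E diam_ge0.
    have dxy x y : C i x -> C i y -> (enorm (x - y) <= r)%R.
      by move=> Cx Cy; rewrite -lee_fin -E; exact: diam_ge.
    have fl x y : C i x -> C i y -> (f x - r <= f y)%R.
      move=> Cx Cy; have := le_trans (flip x y) (dxy x y Cx Cy).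
      rewrite ler_norml => /andP[_ h]; lra.
    pose c := inf (f @` C i).
    exists `[c, (c + r)%R]%classic; split.
    + exact: measurable_itv.
    + move=> x Cx; rewrite /= in_itv /=; apply/andP; split.
        apply: ge_inf; last by exists x.
        by exists (f x0 - r)%R => _ [y Cy <-]; exact: fl.
      have : (f x - r <= c)%R.
        apply: lb_le_inf; first by exists (f x0), x0.
        by move=> _ [y Cy <-]; exact: fl.
      lra.
    + rewrite lebesgue_measure_itv /=; case: ifP => _.
        by rewrite -EFinD lee_fin; lra.
      by rewrite lee_fin.
  - by exists setT; split => //; rewrite leey.
  - by have := diam_ge0 (C i); rewrite E.
have [F hF] := choice hI.
have sub : `[0%R, L]%classic `<=` \bigcup_i F i.
  move=> r; rewrite /= in_itv /= => /andP[r0 rL].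
  pose x := (a + (r / L) *: (b - a))%R.
  have sx : segment a b x.
    exists (r / L)%R; last by rewrite seg_pt.
    by rewrite /= in_itv /= divr_ge0 ?ler_pdivrMr ?mul1r // ltW.
  have [i _ Cix] := cov x sx.
  exists i => //; have [_ h _] := hF i; have := h x Cix.
  suff -> : f x = r by [].
  rewrite /f /x addrAC subrr add0r dotvZl -enorm_sq -/L.
  by field; rewrite Lp.
have Fm : forall i, measurable (F i) by move=> i; have [] := hF i.
have := @measure_sigma_subadditive _ _ _ lebesgue_measure _ F Fm (measurable_itv _) sub.
move=> h.
apply: (le_trans _ (le_trans h _)).
  have e := lebesgue_measure_itv `[0%R, L].
  rewrite /= lte_fin Lgt oppr0 adde0 in e.
  by rewrite -[X in X <= _]e; exact: lexx.
apply: lee_nneseries => [i _ _|i _]; first exact: measure_ge0.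
by have [] := hF i.
Qed.
End H1seg2.
Section Geo.
Context {R : realType} {n : nat}.
Notation vec := 'rV[R]_n.
Implicit Types (u v w x y z d p : vec) (a b t : R).

Lemma H1_ratio (a b a' b' : vec) (c : R) : 0 <= c ->
  enorm (b - a) < c * enorm (b' - a') ->
  (H1 (segment a b) < c%:E * H1 (segment a' b'))%E.
Proof.
move=> c0 h; apply: (le_lt_trans (H1_seg_le a b)).
apply: (@lt_le_trans _ _ (c * enorm (b' - a'))%:E); first by rewrite lte_fin.
rewrite EFinM; apply: lee_wpmul2l; first by rewrite lee_fin.
exact: H1_seg_ge.
Qed.

Lemma enorm_lt_scale x y c : 0 < c -> dotv x x < c ^+ 2 * dotv y y ->
  enorm x < c * enorm y.
Proof.
move=> c0 h; rewrite -ltr_sqr ?nnegrE ?mulr_ge0 ?enorm_ge0 ?ltW //.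
by rewrite exprMn !enorm_sq.
Qed.

Lemma nsq_sub_le x y : dotv (x - y) (x - y) <= 2 * dotv x x + 2 * dotv y y.
Proof. have := dotv_ge0 (x + y); rewrite !dotvE (dotvC y x); lra. Qed.

Lemma projP p d x : proj_line p d x - p = (dotv (x - p) d / dotv d d) *: d.
Proof. by rewrite /proj_line addrAC subrr add0r. Qed.

Lemma on_line p d x : line p d (proj_line p d x).
Proof. by exists (dotv (x - p) d / dotv d d). Qed.

Lemma grp4 (a b c e : vec) : (a - b) - (c - e) = (a - c) - (b - e).
Proof. by rewrite !opprB !addrA addrAC (addrAC a) -!addrA (addrC e). Qed.

Lemma perp_bound p d v v' a : d != 0 ->
  dotv (v - proj_line p d v) (v - proj_line p d v) <= a ^+ 2 ->
  dotv (v' - proj_line p d v') (v' - proj_line p d v') <= a ^+ 2 ->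
  dotv (v' - v) (v' - v) - dotv (v' - v) d ^+ 2 / dotv d d <= 4 * a ^+ 2.
Proof.
move=> d0 h h'; have dp := dotv_gt0 d0.
have e : (v' - v) - (dotv (v' - v) d / dotv d d) *: d =
   (v' - proj_line p d v') - (v - proj_line p d v).
  by rewrite -(projB p) grp4.
have := nsq_subZ (v' - v) d (dotv (v' - v) d / dotv d d).
rewrite e => e2.
have -> : dotv (v' - v) (v' - v) - dotv (v' - v) d ^+ 2 / dotv d d =
  dotv (v' - v) (v' - v) - 2 * (dotv (v' - v) d / dotv d d) * dotv (v' - v) d +
    (dotv (v' - v) d / dotv d d) ^+ 2 * dotv d d.
  by field; rewrite gt_eqF.
rewrite -e2; apply: le_trans (nsq_sub_le _ _) _; lra.
Qed.

Lemma key_scalar (A B X Y a : R) : A ^+ 2 = X * Y -> B ^+ 2 <= 16 * a ^+ 4 ->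
  1 - 4 * a ^+ 2 <= X -> 1 - 4 * a ^+ 2 <= Y -> 0 < a -> a <= 1 / 16 ->
  0 < A * (A + B).
Proof.
move=> hA hB hX hY a0 a1.
have s0 : 0 <= a ^+ 2 by exact: sqr_ge0.
have s1 : a ^+ 2 <= 1 / 256.
  have h := ler_pM (ltW a0) (ltW a0) a1 a1.
  rewrite -expr2 in h; apply: (le_trans h); lra.
have h4 : a ^+ 4 = a ^+ 2 * a ^+ 2 by rewrite -exprD.
have g0 : 0 <= 1 - 4 * a ^+ 2 by lra.
have hXY : (1 - 4 * a ^+ 2) * (1 - 4 * a ^+ 2) <= X * Y.
  by apply: ler_pM.
have hAB := sqr_ge0 (A + B).
have hs : a ^+ 2 * a ^+ 2 <= 1 / 256 * (1 / 256) by apply: ler_pM.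
rewrite h4 in hB; nra.
Qed.

End Geo.
Section Geo2.
Context {R : realType} {n : nat}.
Notation vec := 'rV[R]_n.
Implicit Types (u v w x y z d p e : vec) (a b t : R).

Lemma nsq_Q w d : d != 0 ->
  dotv (w - (dotv w d / dotv d d) *: d) (w - (dotv w d / dotv d d) *: d) =
  dotv w w - dotv w d ^+ 2 / dotv d d.
Proof. move=> d0; have dp := dotv_gt0 d0; rewrite nsq_subZ; field; by rewrite gt_eqF. Qed.

Lemma sign_key d w e a : d != 0 -> 0 < a -> a <= 1 / 16 ->
  1 <= dotv w w -> 1 <= dotv e e ->
  dotv w w - dotv w d ^+ 2 / dotv d d <= 4 * a ^+ 2 ->
  dotv e e - dotv e d ^+ 2 / dotv d d <= 4 * a ^+ 2 ->
  0 < dotv w d * dotv e d * dotv w e.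
Proof.
move=> d0 a0 a1 w1 e1 hw he; have dp := dotv_gt0 d0.
have dn : dotv d d != 0 by rewrite gt_eqF.
pose A := dotv w d * dotv e d / dotv d d.
pose B := dotv w e - A.
have hB : dotv (w - (dotv w d / dotv d d) *: d) (e - (dotv e d / dotv d d) *: d) = B.
  rewrite /B /A !dotvE (dotvC d e); field; exact: dn.
have CSq := CS (w - (dotv w d / dotv d d) *: d) (e - (dotv e d / dotv d d) *: d).
rewrite hB !nsq_Q // in CSq.
have hB2 : B ^+ 2 <= 16 * a ^+ 4.
  apply: (le_trans CSq).
  have -> : 16 * a ^+ 4 = (4 * a ^+ 2) * (4 * a ^+ 2) by ring.
  apply: ler_pM => //.
    by rewrite -(nsq_Q w d d0) dotv_ge0.
  by rewrite -(nsq_Q e d d0) dotv_ge0.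
have := @key_scalar R A B (dotv w d ^+ 2 / dotv d d) (dotv e d ^+ 2 / dotv d d) a.
move=> /(_ _ hB2 _ _ a0 a1).
have hAB : A + B = dotv w e by rewrite /B addrC subrK.
rewrite hAB => h.
have -> : dotv w d * dotv e d * dotv w e = (A * dotv w e) * dotv d d.
  by rewrite /A; field.
apply: mulr_gt0 => //; apply: h.
- by rewrite /A; field.
- lra.
- lra.
Qed.

End Geo2.
Section Scal.
Context {R : realType}.

Lemma sign_scalar (a b c d g s : R) : 0 < a * c * g -> 0 < b * d * g ->
  0 < s * (c * d) -> (0 <= a <-> 0 <= s * b).
Proof.
move=> h1 h2 h3.
have H := mulr_gt0 (mulr_gt0 h1 h2) h3.
have e : a * c * g * (b * d * g) * (s * (c * d)) = (a * (s * b)) * (c * d * g) ^+ 2.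
  by ring.
rewrite e in H.
have K := sqr_ge0 (c * d * g).
have P : 0 < a * (s * b) by nra.
split => h; nra.
Qed.

Lemma small_a {a : R} : 0 < a -> a <= 1 / 16 -> 0 < a ^+ 2 /\ a ^+ 2 <= 1 / 256.
Proof.
move=> a0 a1; split; first by rewrite exprn_gt0.
have h := ler_pM (ltW a0) (ltW a0) a1 a1.
rewrite -expr2 in h; apply: (le_trans h); lra.
Qed.

Lemma part2_scalar (E X a : R) : 1 <= E -> E - X <= 4 * a ^+ 2 -> 0 < a -> a <= 1 / 16 ->
  E < (1 + 3 * a ^+ 2) ^+ 2 * X.
Proof.
move=> E1 hX a0 a1; have [s0 s1] := small_a a0 a1.
move: hX s0 s1; set s := a ^+ 2 => hX s0 s1.
have c0 : 0 < (1 + 3 * s) ^+ 2 by rewrite exprn_gt0 //; lra.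
have h1 : (1 + 3 * s) ^+ 2 * (E - 4 * s) <= (1 + 3 * s) ^+ 2 * X.
  by apply: ler_wpM2l; lra.
apply: lt_le_trans h1.
have -> : (1 + 3 * s) ^+ 2 * (E - 4 * s) = E + (6 * s + 9 * s ^+ 2) * E - 4 * s * (1 + 3 * s) ^+ 2.
  by ring.
have h2 : 6 * s + 9 * s ^+ 2 <= (6 * s + 9 * s ^+ 2) * E.
  rewrite -[X in X <= _]mulr1 ler_pM2l //; nra.
have h3 : 4 * s * (1 + 3 * s) ^+ 2 < 6 * s + 9 * s ^+ 2.
  have -> : 4 * s * (1 + 3 * s) ^+ 2 = 4 * s + 24 * s ^+ 2 + 36 * s ^+ 3 by ring.
  have ss : s ^+ 2 <= s / 256 by rewrite expr2; nra.
  have sss : s ^+ 3 <= s ^+ 2 / 256 by rewrite exprS; nra.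
  nra.
lra.
Qed.

Lemma part3_scalar (D G r a : R) : 0 < a -> a <= 1 / 16 ->
  r ^+ 2 * D - r ^+ 2 * G <= 16 * a ^+ 2 -> (1 - 2 * a) ^+ 2 <= r ^+ 2 * D ->
  D < (1 + 12 * a ^+ 2) ^+ 2 * G.
Proof.
move=> a0 a1 h1 h2; have [s0 s1] := small_a a0 a1.
set c := (1 + 12 * a ^+ 2) ^+ 2.
have ha : 7 / 8 <= 1 - 2 * a by lra.
have hb : 49 / 64 <= (1 - 2 * a) ^+ 2 by rewrite expr2; nra.
have hc : c <= (1 + 12 / 256) ^+ 2.
  rewrite /c; have h : 1 + 12 * a ^+ 2 <= 1 + 12 / 256 by lra.
  by rewrite ler_sqr ?nnegrE //; lra.
have hc1 : c - 1 = 24 * a ^+ 2 + 144 * a ^+ 4 by rewrite /c; ring.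
have key : 16 * a ^+ 2 * c < (c - 1) * (1 - 2 * a) ^+ 2.
  rewrite hc1.
  have h4 : 0 <= 144 * a ^+ 4 * (1 - 2 * a) ^+ 2.
    apply: mulr_ge0; last exact: sqr_ge0.
    by apply: mulr_ge0; [lra | exact: exprn_ge0 (ltW a0)].
  have -> : (24 * a ^+ 2 + 144 * a ^+ 4) * (1 - 2 * a) ^+ 2 =
    a ^+ 2 * (24 * (1 - 2 * a) ^+ 2) + 144 * a ^+ 4 * (1 - 2 * a) ^+ 2 by ring.
  have h5 : a ^+ 2 * (16 * c) < a ^+ 2 * (24 * (1 - 2 * a) ^+ 2).
    rewrite ltr_pM2l //; lra.
  lra.
have c0 : 1 <= c.
  rewrite /c; have h : 1 <= 1 + 12 * a ^+ 2 by lra.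
  by rewrite -(expr1n R 2) ler_sqr ?nnegrE //; lra.
have r0 : 0 < r ^+ 2 * D by apply: lt_le_trans h2; rewrite exprn_gt0 //; lra.
have h6 : c * (r ^+ 2 * D - r ^+ 2 * G) <= c * (16 * a ^+ 2) by apply: ler_wpM2l; lra.
have h7 : (c - 1) * (1 - 2 * a) ^+ 2 <= (c - 1) * (r ^+ 2 * D) by apply: ler_wpM2l; lra.
have h8 : r ^+ 2 * D < r ^+ 2 * (c * G) by nra.
have rp : 0 < r ^+ 2.
  rewrite lt_neqAle sqr_ge0 andbT eq_sym; apply/negP => /eqP r2.
  by move: r0; rewrite r2 mul0r ltxx.
by rewrite -(ltr_pM2l rp).
Qed.

End Scal.
Section Geo3.
Context {R : realType} {n : nat}.
Notation vec := 'rV[R]_n.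
Implicit Types (u v w x y z d p e : vec) (a b t k : R).

Lemma subpp x y p : (x - p) - (y - p) = x - y.
Proof. by rewrite opprB addrA subrK. Qed.

Lemma dotvNN x : dotv (- x) (- x) = dotv x x.
Proof. by rewrite dotvNl dotvNr opprK. Qed.

Lemma enorm_pos {d : vec} : d != 0 -> 0 < enorm d.
Proof. by move=> d0; rewrite /enorm sqrtr_gt0 dotv_gt0. Qed.

Lemma line_id p d k : d != 0 -> k ^+ 2 = 1 ->
  line_identification (line p d) (fun x => k * dotv (x - p) d / enorm d).
Proof.
move=> d0 k1; have E0 := enorm_pos d0.
have En : enorm d != 0 by rewrite gt_eqF.
have ED : dotv d d = enorm d ^+ 2 by rewrite enorm_sq.
have nk : `|k| = 1 by rewrite -sqrtr_sqr k1 sqrtr1.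
split.
  move=> _ _ [t _ <-] [s _ <-].
  have hp u : p + u - p = u by rewrite addrAC subrr add0r.
  rewrite !hp opprD addrACA subrr add0r -[t *: d - s *: d]scalerBl enormZ.
  rewrite !dotvZl ED.
  have -> : k * (t * enorm d ^+ 2) / enorm d - k * (s * enorm d ^+ 2) / enorm d =
     k * ((t - s) * enorm d) by field.
  by rewrite normrM nk mul1r normrM (gtr0_norm E0).
move=> r; exists (p + (k * r / enorm d) *: d); first by exists (k * r / enorm d).
rewrite addrAC subrr add0r dotvZl ED.
have -> : k * (k * r / enorm d * enorm d ^+ 2) / enorm d = k ^+ 2 * r by field.
by rewrite k1 mul1r.
Qed.

Lemma phi_proj p d k x : d != 0 ->
  k * dotv (proj_line p d x - p) d / enorm d = k * dotv (x - p) d / enorm d.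
Proof.
move=> d0; have dp := dotv_gt0 d0.
rewrite projP dotvZl mulfVK //; by rewrite gt_eqF.
Qed.

Lemma near2 p1 d1 p2 d2 v a : d1 != 0 ->
  dotv (v - proj_line p1 d1 v) (v - proj_line p1 d1 v) <= a ^+ 2 ->
  dotv (v - proj_line p2 d2 v) (v - proj_line p2 d2 v) <= a ^+ 2 ->
  dotv (proj_line p2 d2 v - proj_line p1 d1 (proj_line p2 d2 v))
       (proj_line p2 d2 v - proj_line p1 d1 (proj_line p2 d2 v)) <= (2 * a) ^+ 2.
Proof.
move=> d0 h1 h2.
set b := proj_line p2 d2 v.
apply: le_trans (@closest _ _ p1 d1 b _ d0 (on_line p1 d1 v)) _.
have -> : b - proj_line p1 d1 v = (b - v) - (proj_line p1 d1 v - v).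
  by rewrite subpp.
apply: le_trans (nsq_sub_le _ _) _.
rewrite -(dotvNN (b - v)) -(dotvNN (proj_line p1 d1 v - v)) !opprB.
have -> : (2 * a) ^+ 2 = 2 * a ^+ 2 + 2 * a ^+ 2 by ring.
lra.
Qed.

End Geo3.
Lemma seg_l {R : realType} {n : nat} (u1 u2 : 'rV[R]_n) : segment u1 u2 u1.
Proof.
exists 0%R; first by rewrite /= in_itv /= lexx ler01.
by rewrite subr0 scale1r scale0r addr0.
Qed.

Lemma seg_r {R : realType} {n : nat} (u1 u2 : 'rV[R]_n) : segment u1 u2 u2.
Proof.
exists 1%R; first by rewrite /= in_itv /= lexx ler01.
by rewrite subrr scale0r add0r scale1r.
Qed.

Lemma xsub {R : realType} {n : nat} (x y : 'rV[R]_n) : x - (x - y) = y.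
Proof. by rewrite opprB addrC subrK. Qed.

Lemma cmp_phi {R : realType} {n : nat} (p d x y : 'rV[R]_n) (k : R) : d != 0 ->
  (k * dotv (x - p) d / enorm d <= k * dotv (y - p) d / enorm d) = (0 <= k * dotv (y - x) d).
Proof.
move=> d0.
by rewrite -subr_ge0 -mulrBl -mulrBr -dotvBl subpp pmulr_lge0 ?invr_gt0 ?enorm_pos.
Qed.

Theorem lemma8p3 (R : realType) (n : nat) (V : set 'rV[R]_n)
  (p1 d1 p2 d2 : 'rV[R]_n) (alpha : R) :
  (exists v v', V v /\ V v' /\ v != v') ->
  (forall v v', V v -> V v' -> v != v' -> 1 <= enorm (v - v')) ->
  d1 != 0 -> d2 != 0 ->
  0 < alpha -> alpha <= 1 / 16 ->
  (forall v, V v -> dist_set v (line p1 d1) <= alpha) ->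
  (forall v, V v -> dist_set v (line p2 d2) <= alpha) ->
  let pi1 := proj_line p1 d1 in
  let pi2 := proj_line p2 d2 in
  (exists phi1 phi2 : 'rV[R]_n -> R,
      line_identification (line p1 d1) phi1 /\
      line_identification (line p2 d2) phi2 /\
      forall v' v'', V v' -> V v'' ->
        (phi1 (pi1 v') <= phi1 (pi1 v'') <-> phi2 (pi2 v') <= phi2 (pi2 v''))) /\
  (forall v1 v2, V v1 -> V v2 -> v1 != v2 ->
     (* v1, v2 consecutive w.r.t. the order of pi1(V) along line p1 d1 *)
     ~ (exists v, V v /\
          ((dotv (pi1 v1) d1 < dotv (pi1 v) d1 < dotv (pi1 v2) d1) \/
           (dotv (pi1 v2) d1 < dotv (pi1 v) d1 < dotv (pi1 v1) d1))) ->
     forall u1 u2, u1 != u2 -> segment u1 u2 `<=` segment v1 v2 ->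
       (H1 (segment u1 u2) <
        (1 + 3 * alpha ^+ 2)%:E * H1 (segment (pi1 u1) (pi1 u2)))%E) /\
  (forall y1 y2, y1 != y2 -> segment y1 y2 `<=` line p2 d2 ->
     (H1 (segment y1 y2) <
      (1 + 12 * alpha ^+ 2)%:E * H1 (segment (pi1 y1) (pi1 y2)))%E).
Proof.
move=> [v0 [v1 [Vv0 [Vv1 v01]]]] sep d10 d20 a0 a16 dist1 dist2 pi1 pi2.
rewrite /pi1 /pi2; clear pi1 pi2.
have a0' : 0 <= alpha := ltW a0.
have dp1 := dotv_gt0 d10; have dp2 := dotv_gt0 d20.
have dn1 : dotv d1 d1 != 0 by rewrite gt_eqF.
have dn2 : dotv d2 d2 != 0 by rewrite gt_eqF.
have q1 v : V v -> dotv (v - proj_line p1 d1 v) (v - proj_line p1 d1 v) <= alpha ^+ 2.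
  by move=> Vv; apply: dist_sq => //; exact: dist1.
have q2 v : V v -> dotv (v - proj_line p2 d2 v) (v - proj_line p2 d2 v) <= alpha ^+ 2.
  by move=> Vv; apply: dist_sq => //; exact: dist2.
have sepq v v' : V v -> V v' -> v != v' -> 1 <= dotv (v' - v) (v' - v).
  move=> Vv Vv' vv'; have := sep v' v Vv' Vv; rewrite eq_sym => /(_ vv').
  by rewrite enorm_ge // expr1n.
have perp1 v v' : V v -> V v' ->
   dotv (v' - v) (v' - v) - dotv (v' - v) d1 ^+ 2 / dotv d1 d1 <= 4 * alpha ^+ 2.
  by move=> Vv Vv'; exact: (perp_bound p1 d1 v v' alpha d10 (q1 v Vv) (q1 v' Vv')).
have perp2 v v' : V v -> V v' ->
   dotv (v' - v) (v' - v) - dotv (v' - v) d2 ^+ 2 / dotv d2 d2 <= 4 * alpha ^+ 2.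
  by move=> Vv Vv'; exact: (perp_bound p2 d2 v v' alpha d20 (q2 v Vv) (q2 v' Vv')).
have e1 := sepq v0 v1 Vv0 Vv1 v01.
split; [|split].
-
  have s1 := sign_key d1 (v1 - v0) (v1 - v0) alpha d10 a0 a16 e1 e1
    (perp1 v0 v1 Vv0 Vv1) (perp1 v0 v1 Vv0 Vv1).
  have s2 := sign_key d2 (v1 - v0) (v1 - v0) alpha d20 a0 a16 e1 e1
    (perp2 v0 v1 Vv0 Vv1) (perp2 v0 v1 Vv0 Vv1).
  pose sg : R := if 0 < dotv (v1 - v0) d1 * dotv (v1 - v0) d2 then 1 else -1.
  have hsg2 : sg ^+ 2 = 1 by rewrite /sg; case: ifP => _; rewrite ?sqrrN expr1n.
  have ne : dotv (v1 - v0) d1 * dotv (v1 - v0) d2 != 0.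
    rewrite mulf_neq0 //; apply/eqP => h.
      by move: s1; rewrite h !mul0r ltxx.
    by move: s2; rewrite h !mul0r ltxx.
  have hsg : 0 < sg * (dotv (v1 - v0) d1 * dotv (v1 - v0) d2).
    rewrite /sg; case: ifP => h; first by rewrite mul1r.
    move/negbT: h; rewrite -leNgt => h.
    by rewrite mulN1r oppr_gt0 lt_neqAle ne h.
  exists (fun x => 1 * dotv (x - p1) d1 / enorm d1).
  exists (fun x => sg * dotv (x - p2) d2 / enorm d2).
  split; first exact: line_id d10 (expr1n _ _).
  split; first exact: line_id d20 hsg2.
  move=> v' v'' Vv' Vv''.
  rewrite !phi_proj //.
  rewrite !cmp_phi // mul1r.
  have [vv|vv] := eqVneq v' v''.
    by rewrite vv subrr !dotv0l mulr0.
  have t1 := sign_key d1 (v'' - v') (v1 - v0) alpha d10 a0 a16 (sepq v' v'' Vv' Vv'' vv) e1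
    (perp1 v' v'' Vv' Vv'') (perp1 v0 v1 Vv0 Vv1).
  have t2 := sign_key d2 (v'' - v') (v1 - v0) alpha d20 a0 a16 (sepq v' v'' Vv' Vv'' vv) e1
    (perp2 v' v'' Vv' Vv'') (perp2 v0 v1 Vv0 Vv1).
  exact: sign_scalar t1 t2 hsg.
-
  move=> va vb Va Vb vab _ u1 u2 u12 sub.
  have [t1 _ eu1] := sub u1 (seg_l u1 u2).
  have [t2 _ eu2] := sub u2 (seg_r u1 u2).
  rewrite seg_pt in eu1; rewrite seg_pt in eu2.
  have c0 : 0 < 1 + 3 * alpha ^+ 2 by have := sqr_ge0 alpha; lra.
  apply: H1_ratio; first exact: ltW.
  have hw : u2 - u1 = (t2 - t1) *: (vb - va).
    rewrite -eu1 -eu2 opprD addrACA subrr add0r.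
    by rewrite scalerBl.
  rewrite projB hw.
  apply: enorm_lt_scale => //.
  set s := t2 - t1; set E := vb - va.
  have s0 : s != 0.
    apply/eqP => s0; move/negP: u12; apply.
    by rewrite eq_sym -subr_eq0 hw -/s s0 scale0r.
  have sp : 0 < s ^+ 2 by rewrite lt_neqAle sqr_ge0 andbT eq_sym sqrf_eq0.
  have h := part2_scalar _ _ _ (sepq va vb Va Vb vab) (perp1 va vb Va Vb) a0 a16.
  have -> : dotv (s *: E) (s *: E) = s ^+ 2 * dotv E E by rewrite dotvZl dotvZr; ring.
  set k := dotv (s *: E) d1 / dotv d1 d1.
  have -> : dotv (k *: d1) (k *: d1) = s ^+ 2 * (dotv E d1 ^+ 2 / dotv d1 d1).
    by rewrite dotvZl dotvZr /k dotvZl; field.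
  rewrite mulrCA ltr_pM2l //.
-
  move=> y1 y2 y12 sub.
  have [ty1 _ ey1] := sub y1 (seg_l y1 y2).
  have [ty2 _ ey2] := sub y2 (seg_r y1 y2).
  have c0 : 0 < 1 + 12 * alpha ^+ 2 by have := sqr_ge0 alpha; lra.
  apply: H1_ratio; first exact: ltW.
  have hw : y2 - y1 = (ty2 - ty1) *: d2.
    rewrite -ey1 -ey2 opprD addrACA subrr add0r.
    by rewrite scalerBl.
  rewrite projB hw.
  apply: enorm_lt_scale => //.
  set s := ty2 - ty1.
  have s0 : s != 0.
    apply/eqP => s0; move/negP: y12; apply.
    by rewrite eq_sym -subr_eq0 hw -/s s0 scale0r.
  have sp : 0 < s ^+ 2 by rewrite lt_neqAle sqr_ge0 andbT eq_sym sqrf_eq0.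
  set a1 := proj_line p2 d2 v1; set a0_ := proj_line p2 d2 v0.
  have fi := perp_bound p1 d1 a0_ a1 (2 * alpha) d10
     (near2 p1 d1 p2 d2 v0 alpha d10 (q1 v0 Vv0) (q2 v0 Vv0))
     (near2 p1 d1 p2 d2 v1 alpha d10 (q1 v1 Vv1) (q2 v1 Vv1)).
  set g := (v1 - a1) - (v0 - a0_).
  have hg : dotv g g <= (2 * alpha) ^+ 2.
    apply: le_trans (nsq_sub_le _ _) _.
    have := q2 v1 Vv1; have := q2 v0 Vv0; rewrite -/a1 -/a0_.
    have -> : (2 * alpha) ^+ 2 = 2 * alpha ^+ 2 + 2 * alpha ^+ 2 by ring.
    lra.
  have he : (a1 - a0_) + g = v1 - v0.
    have he' : (v1 - v0) - g = a1 - a0_ by rewrite /g grp4 !xsub.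
    by rewrite -he' subrK.
  have fii : (1 - 2 * alpha) ^+ 2 <= dotv (a1 - a0_) (a1 - a0_).
    rewrite -enorm_ge; last lra.
    have t := enorm_triangle (a1 - a0_) g; rewrite he in t.
    have : 1 <= enorm (v1 - v0) by rewrite enorm_ge // expr1n.
    have : enorm g <= 2 * alpha by rewrite enorm_le //; lra.
    lra.
  have hr : a1 - a0_ = (dotv (v1 - v0) d2 / dotv d2 d2) *: d2 by rewrite projB.
  rewrite hr in fi fii.
  set r := dotv (v1 - v0) d2 / dotv d2 d2 in fi fii.
  set G := dotv d2 d1 ^+ 2 / dotv d1 d1.
  have fi' : r ^+ 2 * dotv d2 d2 - r ^+ 2 * G <= 16 * alpha ^+ 2.
    move: fi; rewrite !dotvZl !dotvZr /G.
    have -> : r * (r * dotv d2 d2) - (r * dotv d2 d1) ^+ 2 / dotv d1 d1 =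
      r ^+ 2 * dotv d2 d2 - r ^+ 2 * (dotv d2 d1 ^+ 2 / dotv d1 d1) by field.
    have -> : 4 * (2 * alpha) ^+ 2 = 16 * alpha ^+ 2 by ring.
    by [].
  have fii' : (1 - 2 * alpha) ^+ 2 <= r ^+ 2 * dotv d2 d2.
    by move: fii; rewrite dotvZl dotvZr mulrA -expr2.
  have key := part3_scalar _ _ _ _ a0 a16 fi' fii'.
  have -> : dotv (s *: d2) (s *: d2) = s ^+ 2 * dotv d2 d2 by rewrite dotvZl dotvZr; ring.
  set k := dotv (s *: d2) d1 / dotv d1 d1.
  have -> : dotv (k *: d1) (k *: d1) = s ^+ 2 * G.
    by rewrite dotvZl dotvZr /k /G dotvZl; field.
  by rewrite mulrCA ltr_pM2l.
Qed.
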